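(* (i) For every even $n$ and every integer $k$ with $4\le k\le n$, every one-factorization of $K_n$ has a set $S$ of $k$ vertices with deficit $D(S)\ge k-3$. (ii) For every integer $d\ge -2$ there are $C>0$ and $n_0$ such that for every even $n\ge n_0$, every one-factorization of $K_n$ has a set $S$ of $k\le C\log n$ vertices (for some $k\ge1$) with deficit $D(S)\ge k+d$.
   Context: A one-factorization of $K_n$ ($n$ even) is a proper edge-coloring of $K_n$ with $n-1$ colors, so each color class is a perfect matching. For a set $S$ of vertices, $\gamma(S)$ is the number of distinct colors appearing on edges with both endpoints in $S$, and the deficit of $S$ is $D(S)=\binom{|S|}{2}-\gamma(S)$. *)

(* Defs.v *)
From Stdlib Require Import Reals.
From HB Require Import structures.
From mathcomp Require Import all_boot all_order all_algebra.

Set Implicit Arguments. Unset Strict Implicit. Unset Printing Implicit Defensive.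

(* Vertices of K_n are 'I_n; colors are 'I_(n.-1) (n-1 colors).
   c u v is the color of the edge {u,v} (for u != v; c u u is irrelevant). *)
Definition one_factorization (n : nat) (c : 'I_n -> 'I_n -> 'I_n.-1) : Prop :=
  (forall u v : 'I_n, c u v = c v u) /\
  (forall u v w : 'I_n, u != v -> u != w -> c u v = c u w -> v = w).

Definition gamma (n : nat) (c : 'I_n -> 'I_n -> 'I_n.-1) (S : {set 'I_n}) : nat :=
  #|[set c u v | u in S, v in S & u != v]|.

Definition deficit (n : nat) (c : 'I_n -> 'I_n -> 'I_n.-1) (S : {set 'I_n}) : int :=
  ('C(#|S|, 2))%:Z - (gamma c S)%:Z.

(* Main.v *)
Require Import Defs.
From Stdlib Require Import Reals Lra.
From HB Require Import structures.
From mathcomp Require Import all_boot all_order all_algebra zify.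

Set Implicit Arguments. Unset Strict Implicit. Unset Printing Implicit Defensive.


Lemma card_pairs (V : finType) (P : V -> V -> bool) :
  #|[set p : V * V | P p.1 p.2]| = (\sum_x #|[set y | P x y]|)%N.
Proof.
rewrite -sum1_card.
rewrite (eq_bigl (fun p : V * V => true && P p.1 p.2)); last by move=> p; rewrite inE.
rewrite -(pair_big_dep (fun _ => true) P (fun _ _ => 1%N)).
by apply: eq_bigr => x _; rewrite -sum1_card; apply: eq_bigl => y; rewrite inE.
Qed.

Lemma card_swap (V : finType) (P : V -> V -> bool) :
  #|[set p : V * V | P p.1 p.2]| = #|[set p : V * V | P p.2 p.1]|.
Proof.
have -> : [set p : V * V | P p.2 p.1] = [set (p.2, p.1) | p in [set p : V * V | P p.1 p.2]].
  apply/setP=> [[a b]]; rewrite inE; apply/idP/imsetP => /=.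
    by move=> h; exists (b, a); rewrite ?inE.
  by case=> [[x y]]; rewrite inE /= => h [-> ->].
rewrite card_imset //; by move=> [a b] [x y] /= [-> ->].
Qed.

Lemma card_bigcup_leq (I T : finType) (P : pred I) (F : I -> {set T}) :
  (#|\bigcup_(i | P i) F i| <= \sum_(i | P i) #|F i|)%N.
Proof.
elim/big_ind2: _ => //; first by rewrite cards0.
move=> A a B b hA hB; apply: leq_trans (leq_card_setU _ _) _; exact: leq_add.
Qed.

Lemma cardU_le (T : finType) (A B : {set T}) : (#|A :|: B| <= #|A| + #|B|)%N.
Proof. by case: (leq_card_setU A B). Qed.
Lemma cardU_disj (T : finType) (A B : {set T}) : [disjoint A & B] -> #|A :|: B| = (#|A| + #|B|)%N.
Proof. by move=> d; case: (leq_card_setU A B) => _; rewrite d => /eqP. Qed.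

Section Graph.
Variable V : finType.
Variable adj : rel V.
Hypothesis adj_sym : forall x y, adj x y = adj y x.
Hypothesis adj_irr : forall x, adj x x = false.

Definition e2 (X : {set V}) := #|[set p : V * V | [&& p.1 \in X, p.2 \in X & adj p.1 p.2]]|.
Definition Nb (X : {set V}) := [set y | [exists x in X, adj x y]].

Section Growth.
Variable t : nat.
Hypothesis hdeg : forall x, #|[set y | adj x y]| = t.

Lemma growth (X : {set V}) : (t * #|X| <= t * #|Nb X :\: X| + e2 X)%N.
Proof.
have h1 : (t * #|X| = \sum_(x in X) #|[set y | adj x y]|)%N.
  have -> : (\sum_(x in X) #|[set y | adj x y]| = \sum_(x in X) t)%N by apply: eq_bigr => x _; rewrite hdeg.
  by rewrite sum_nat_const mulnC.
have h2 : forall x, #|[set y | adj x y]| = (#|[set y | (y \in X) && adj x y]| + #|[set y | (y \notin X) && adj x y]|)%N.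
  move=> x; rewrite -(cardsID X [set y | adj x y]); congr (_ + _)%N; apply: eq_card => y; rewrite !inE andbC //.
have h3 : e2 X = (\sum_(x in X) #|[set y | (y \in X) && adj x y]|)%N.
  rewrite /e2 (card_pairs (fun a b => [&& a \in X, b \in X & adj a b])) [in RHS]big_mkcond /=.
  apply: eq_bigr => x _; case: (x \in X) => //=; apply/eqP; rewrite cards_eq0; apply/eqP/setP=> y; by rewrite !inE.
have h4 : (\sum_(x in X) #|[set y | (y \notin X) && adj x y]| =
            #|[set p : V * V | [&& p.1 \in X, p.2 \notin X & adj p.1 p.2]]|)%N.
  rewrite (card_pairs (fun a b => [&& a \in X, b \notin X & adj a b])) [in LHS]big_mkcond /=.
  apply: eq_bigr => x _; case: (x \in X) => //=; apply/esym/eqP; rewrite cards_eq0; apply/eqP/setP=> y; by rewrite !inE.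
have h5 : (#|[set p : V * V | [&& p.1 \in X, p.2 \notin X & adj p.1 p.2]]| <= t * #|Nb X :\: X|)%N.
  rewrite (card_swap (fun a b => [&& a \in X, b \notin X & adj a b])).
  rewrite (card_pairs (fun b a => [&& a \in X, b \notin X & adj a b])).
  rewrite [X in (_ <= X)%N]mulnC -sum_nat_const.
  rewrite [X in (_ <= X)%N]big_mkcond /=.
  apply: leq_sum => y _.
  case: (boolP (y \in Nb X :\: X)) => hy.
    rewrite -(hdeg y); apply: subset_leq_card; apply/subsetP=> x; rewrite !inE adj_sym.
    by case/and3P.
  rewrite leqn0 cards_eq0; apply/eqP/setP=> x; rewrite !inE; apply/negP=> /and3P[xX yX axy].
  move: hy; rewrite !inE yX /=; move/negP; apply; apply/existsP; exists x; by rewrite xX.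
rewrite h1 h3 (eq_bigr _ (fun x _ => h2 x)) big_split /= h4.
rewrite addnC; exact: leq_add.
Qed.
End Growth.

Variable v : V.
Definition B k := iter k (fun X => X :|: Nb X) [set v].

Lemma B0 : B 0 = [set v]. Proof. by []. Qed.
Lemma BS k y : (y \in B k.+1) = (y \in B k) || [exists x in B k, adj x y].
Proof. by rewrite /= !inE. Qed.
Lemma B_mono k l : (k <= l)%N -> B k \subset B l.
Proof.
move=> /subnK <-; elim: (l - k)%N => [|m IH] //=; apply: subset_trans IH _; exact: subsetUl.
Qed.
Lemma v_B k : v \in B k.
Proof. by apply: (subsetP (B_mono (leq0n k))); rewrite B0 set11. Qed.

Section Tree.
Variable r : nat.
Definition dep x := find (fun k => x \in B k) (iota 0 r.+1).

Lemma dep_spec x : x \in B r -> [/\ (dep x <= r)%N, x \in B (dep x) &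
   forall k, (k < dep x)%N -> x \notin B k].
Proof.
move=> xB.
have hh : has (fun k => x \in B k) (iota 0 r.+1).
  apply/hasP; exists r; last by []. by rewrite mem_iota add0n ltnSn.
have hlt : (dep x < r.+1)%N by move: hh; rewrite has_find size_iota.
split; first by [].
  by have := nth_find 0 hh; rewrite -/(dep x) nth_iota.
move=> k hk; have hk' : (k < r.+1)%N by exact: ltn_trans hk hlt.
by have := before_find 0 hk; rewrite nth_iota // add0n => ->.
Qed.

Lemma dep_le x k : (k <= r)%N -> x \in B k -> (dep x <= k)%N.
Proof.
move=> kr xk; have xr : x \in B r by apply: (subsetP (B_mono kr)).
have [_ _ h] := dep_spec xr; rewrite leqNgt; apply/negP=> /h; by rewrite xk.
Qed.

Lemma dep0 x : x \in B r -> (dep x == 0%N) = (x == v).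
Proof.
move=> xr; have [_ h1 _] := dep_spec xr; apply/idP/idP.
  by move/eqP=> e; rewrite e B0 inE in h1.
move/eqP=> ->; rewrite -leqn0; apply: dep_le => //; by rewrite B0 set11.
Qed.

Definition par x := odflt v [pick y | (y \in B (dep x).-1) && adj x y].

Lemma par_v : par v = v.
Proof.
rewrite /par; case: pickP => //= y /andP[].
have -> : dep v = 0%N by apply/eqP; rewrite dep0 ?eqxx ?v_B.
by rewrite /= ?B0 inE => /eqP->; rewrite adj_irr.
Qed.

Lemma par_spec x : x \in B r -> x != v ->
  [/\ adj x (par x), par x \in B r & (dep (par x) < dep x)%N].
Proof.
move=> xr xv; have [hd hx hb] := dep_spec xr.
have : dep x != 0%N by rewrite dep0.
case ed : (dep x) => [|d] // _; rewrite ed in hd hx hb.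
have xd : x \notin B d by apply: hb.
move: hx; rewrite BS (negbTE xd) /= => /existsP[y /andP[yd ayx]].
rewrite /par ed /=; case: pickP => [z /andP[zd axz]|/(_ y)]; last by rewrite yd adj_sym ayx.
have zr : z \in B r by apply: (subsetP (B_mono (ltnW hd))).
split=> //; rewrite ltnS; apply: dep_le => //; exact: ltnW.
Qed.

Lemma par_B x : x \in B r -> par x \in B r.
Proof. by move=> xr; case: (eqVneq x v) => [->|xv]; [rewrite par_v v_B | case: (par_spec xr xv)]. Qed.

Lemma iter_par x i : x \in B r -> iter i par x \in B r /\ (dep (iter i par x) <= dep x - i)%N.
Proof.
move=> xr; elim: i => [|i [IH1 IH2]] /=; first by rewrite subn0.
split; first exact: par_B.
case: (eqVneq (iter i par x) v) => [->|xv].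
  rewrite par_v; have -> : dep v = 0%N by apply/eqP; rewrite dep0 ?eqxx ?v_B. by [].
have [_ _ h] := par_spec IH1 xv; lia.
Qed.

Definition anc x := [set iter (nat_of_ord i) par x | i : 'I_r.+1].

Lemma anc_spec x : x \in B r -> [/\ v \in anc x, x \in anc x, anc x \subset B r,
  (#|anc x| <= r.+1)%N & forall y, y \in anc x -> par y \in anc x].
Proof.
move=> xr; have [hd _ _] := dep_spec xr.
have itr : iter r par x = v.
  have [h1 h2] := iter_par r xr; apply/eqP; rewrite -dep0 //; lia.
split.
- by apply/imsetP; exists ord_max.
- by apply/imsetP; exists ord0.
- by apply/subsetP=> y /imsetP[i _ ->]; case: (iter_par i xr).
- by apply: leq_trans (leq_imset_card _ _) _; rewrite card_ord.
move=> y /imsetP[i _ ->]; apply/imsetP.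
case: (ltnP i r) => hi.
  by exists (Ordinal (hi : (i.+1 < r.+1)%N)).
have ei : nat_of_ord i = r by have := ltn_ord i; lia.
by exists ord_max => //=; rewrite ei itr par_v.
Qed.

Lemma tree s : (0 < s)%N -> (2 * #|B r| + 2 * s <= e2 (B r) + 2)%N ->
  exists S : {set V}, [/\ S \subset B r, v \in S, (#|S| <= 4 * s * r.+1)%N &
     (2 * #|S| + 2 * s <= e2 S + 2)%N].
Proof.
move=> s0 he.
have vr : v \in B r := v_B r.
set E := [set p : V * V | [&& p.1 \in B r, p.2 \in B r & adj p.1 p.2]].
set T := [set (x, par x) | x in B r :\ v] :|: [set (par x, x) | x in B r :\ v].
have hT : (#|T| + 2 <= 2 * #|B r|)%N.
  have h1 := cardU_le [set (x, par x) | x in B r :\ v] [set (par x, x) | x in B r :\ v].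
  have h2 : (#|[set (x, par x) | x in B r :\ v]| <= #|B r :\ v|)%N := leq_imset_card _ _.
  have h3 : (#|[set (par x, x) | x in B r :\ v]| <= #|B r :\ v|)%N := leq_imset_card _ _.
  have h4 := cardsD1 v (B r); rewrite vr in h4.
  rewrite /T; rewrite /= in h4; lia.
set NT := E :\: T.
have hNT : (2 * s <= #|NT|)%N.
  have h1 := cardsID T E.
  have h2 : (#|E :&: T| <= #|T|)%N by apply: subset_leq_card; exact: subsetIr.
  have h3 : e2 (B r) = #|E| by [].
  rewrite /NT; lia.
have [sq [usq ssq subsq]] : exists sq : seq (V * V), [/\ uniq sq, size sq = (2 * s)%N & {subset sq <= NT}].
  by apply/card_geqP.
set F := [set p in sq].
have cF : #|F| = (2 * s)%N by rewrite cardsE; move/card_uniqP: usq => ->.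
have FP p : p \in F -> [/\ p.1 \in B r, p.2 \in B r, adj p.1 p.2 & p \notin T].
  rewrite inE => /subsq; rewrite !inE => /andP[pT /and3P[]]; by [].
set S := \bigcup_(p in F) (anc p.1 :|: anc p.2).
have SB : S \subset B r.
  apply/bigcupsP=> p /FP[p1 p2 _ _]; have [_ _ a1 _ _] := anc_spec p1; have [_ _ a2 _ _] := anc_spec p2.
  by rewrite subUset a1 a2.
have Sp y : y \in S -> par y \in S.
  case/bigcupP=> p pF; rewrite inE => /orP[] hy; apply/bigcupP; exists p => //; rewrite inE.
    by have [p1 _ _ _] := FP p pF; have [_ _ _ _ a] := anc_spec p1; rewrite a.
  by have [_ p2 _ _] := FP p pF; have [_ _ _ _ a] := anc_spec p2; rewrite a ?orbT.
have FS p : p \in F -> (p.1 \in S) && (p.2 \in S).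
  move=> pF; have [p1 p2 _ _] := FP p pF.
  have [_ a1 _ _ _] := anc_spec p1; have [_ a2 _ _ _] := anc_spec p2.
  by apply/andP; split; apply/bigcupP; exists p => //; rewrite inE ?a1 ?a2 ?orbT.
have vS : v \in S.
  have : (0 < #|F|)%N by rewrite cF; lia.
  rewrite card_gt0 => /set0Pn[p pF]; have [p1 _ _ _] := FP p pF.
  have [a _ _ _ _] := anc_spec p1; apply/bigcupP; exists p => //; by rewrite inE a.
exists S; split; [exact: SB | exact: vS | | ].
  apply: leq_trans (card_bigcup_leq _ _) _.
  have hs : (\sum_(p in F) #|anc p.1 :|: anc p.2| <= \sum_(p in F) (2 * r.+1))%N.
    apply: leq_sum => p pF; have [p1 p2 _ _] := FP p pF.
    have [_ _ _ c1 _] := anc_spec p1; have [_ _ _ c2 _] := anc_spec p2.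
    have := cardU_le (anc p.1) (anc p.2); lia.
  apply: leq_trans hs _; rewrite sum_nat_const cF.
  by rewrite mulnA [(2 * s * 2)%N]mulnC mulnA.
set T1 := [set (x, par x) | x in S :\ v].
set T2 := [set (par x, x) | x in S :\ v].
have cT1 : #|T1| = #|S :\ v|.
  by apply: card_in_imset => x y _ _ [].
have cT2 : #|T2| = #|S :\ v|.
  by apply: card_in_imset => x y _ _ [].
have Sr x : x \in S :\ v -> [/\ x \in B r, x != v & x \in S].
  by rewrite !inE => /andP[xv xS]; rewrite xv xS (subsetP SB).
have d12 : [disjoint T1 & T2].
  apply/pred0P=> p /=; apply/negP=> /andP[/imsetP[x xS ->] /imsetP[y yS [e1 e2]]].
  have [xr xv _] := Sr x xS; have [yr yv _] := Sr y yS.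
  have [_ _ hx] := par_spec xr xv; have [_ _ hy] := par_spec yr yv.
  move: hx hy; rewrite -e1 e2; lia.
have T12 : T1 :|: T2 \subset T.
  apply/subsetP=> p; rewrite /T1 /T2 /T !inE => /orP[] /imsetP[x xS ->]; have [xr xv _] := Sr x xS;
  apply/orP; [left|right]; apply/imsetP; exists x => //; by rewrite !inE xv xr.
have dF : [disjoint T1 :|: T2 & F].
  apply/pred0P=> p /=; apply/negP=> /andP[pT pF]; have [_ _ _ /negP] := FP p pF; apply.
  exact: (subsetP T12).
have sub : T1 :|: T2 :|: F \subset [set p : V * V | [&& p.1 \in S, p.2 \in S & adj p.1 p.2]].
  apply/subsetP=> p; rewrite !inE => /orP[/orP[]|].
  - case/imsetP=> x xS ->; have [xr xv xS'] := Sr x xS; have [a _ _] := par_spec xr xv.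
    by rewrite /= xS' Sp.
  - case/imsetP=> x xS ->; have [xr xv xS'] := Sr x xS; have [a _ _] := par_spec xr xv.
    by rewrite /= xS' Sp // adj_sym.
  - move=> pF; have pF' : p \in F by rewrite /F inE.
    have [_ _ a _] := FP p pF'; by rewrite a andbT FS.
have h1 := subset_leq_card sub.
have h2 := cardU_disj dF.
have h3 := cardU_disj d12.
have h4 := cardsD1 v S; rewrite vS /= in h4.
rewrite /e2; lia.
Qed.
End Tree.
End Graph.


Section Col.
Variable n : nat.
Variable c : 'I_n -> 'I_n -> 'I_n.-1.
Hypothesis hsym : forall u v, c u v = c v u.
Hypothesis hprop : forall u v w, u != v -> u != w -> c u v = c u w -> v = w.

Definition colors (S : {set 'I_n}) := [set c u v | u in S, v in S & u != v].

Lemma gammaE (S : {set 'I_n}) : gamma c S = #|colors S|.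
Proof. by []. Qed.

Lemma colorsP (S : {set 'I_n}) a : reflect (exists u v, [/\ u \in S, v \in S, u != v & a = c u v]) (a \in colors S).
Proof.
apply: (iffP imset2P).
  by case=> u v uS; rewrite inE => /andP[vS uv] ->; exists u, v.
by case=> u [v [uS vS uv ->]]; exists u v => //; rewrite inE vS uv.
Qed.

Lemma surj u a : exists2 y, y != u & c u y = a.
Proof.
have inj : {in [set~ u] &, injective (c u)}.
  move=> y z; rewrite !inE => yu zu; apply: hprop; by rewrite eq_sym.
have : c u @: [set~ u] == setT.
  by rewrite eqEcard subsetT /= card_in_imset // cardsC1 cardsT !card_ord.
move/eqP=> E; have : a \in c u @: [set~ u] by rewrite E inE.
by case/imsetP=> y; rewrite !inE => yu ->; exists y.
Qed.

Lemma colors_add (S : {set 'I_n}) w : w \notin S ->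
  colors (w |: S) \subset colors S :|: (c w @: S).
Proof.
move=> wS; apply/subsetP=> a /colorsP[x [y [xS yS xy ->]]].
move: xS yS xy; rewrite !inE => /orP[/eqP->|xS] /orP[/eqP->|yS] xy.
- by rewrite eqxx in xy.
- by rewrite imset_f ?orbT.
- by rewrite hsym imset_f ?orbT.
- by apply/orP; left; apply/colorsP; exists x, y.
Qed.

Lemma gamma_add (S : {set 'I_n}) w : w \notin S ->
  (gamma c (w |: S) <= gamma c S + #|S|)%N.
Proof.
move=> wS; rewrite !gammaE.
have h1 := subset_leq_card (colors_add wS).
have h3 := cardsUI (colors S) (c w @: S).
have h4 : (#|c w @: S| <= #|S|)%N := leq_imset_card _ _.
lia.
Qed.

Lemma gamma_add1 (S : {set 'I_n}) w s : w \notin S -> s \in S -> c w s \in colors S ->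
  (gamma c (w |: S) + 1 <= gamma c S + #|S|)%N.
Proof.
move=> wS sS cS; rewrite !gammaE.
have h1 := subset_leq_card (colors_add wS).
have h2 : (1 <= #|colors S :&: c w @: S|)%N.
  by rewrite card_gt0; apply/set0Pn; exists (c w s); rewrite inE cS imset_f.
have h3 := cardsUI (colors S) (c w @: S).
have h4 : (#|c w @: S| <= #|S|)%N := leq_imset_card _ _.
lia.
Qed.

Lemma gamma_closed (S : {set 'I_n}) s0 : s0 \in S ->
  (forall w s, w \notin S -> s \in S -> c w s \notin colors S) ->
  (gamma c S + 1 <= #|S|)%N.
Proof.
move=> s0S H; rewrite gammaE.
have sub : colors S \subset c s0 @: (S :\ s0).
  apply/subsetP=> a aS; have [y ys0 ya] := surj s0 a.
  case yS: (y \in S).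
    by apply/imsetP; exists y => //; rewrite !inE ys0 yS.
  have := H y s0; rewrite yS s0S -hsym ya => /(_ isT isT); by rewrite aS.
have h1 := subset_leq_card sub.
have h2 : (#|c s0 @: (S :\ s0)| <= #|S :\ s0|)%N := leq_imset_card _ _.
have h3 := cardsD1 s0 S; rewrite s0S in h3; lia.
Qed.
End Col.

Lemma bin2_mul k : (2 * 'C(k,2) = k * k.-1)%N.
Proof.
elim: k => [|k IH] //; rewrite binS bin1; case: k IH => [|k] /= IH //; lia.
Qed.

Lemma bin2_ge k : (k <= 'C(k,2) + 1)%N.
Proof.
case: k => [|[|k]] //; rewrite binS bin1; have := leq_bin2l 2 (leq0n k); lia.
Qed.

Lemma part1 n (c : 'I_n -> 'I_n -> 'I_n.-1) : one_factorization c ->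
  forall k, (1 <= k <= n)%N -> exists S : {set 'I_n}, #|S| = k /\ (k + gamma c S <= 'C(k,2) + 3)%N.
Proof.
case=> hsym hprop; elim=> [|k IH] //; case: k IH => [|k] IH /andP[_ kn].
  have u : 'I_n by exists 0%N.
  exists [set u]; rewrite cards1; split=> //.
  suff -> : gamma c [set u] = 0%N by [].
  rewrite gammaE; apply/eqP; rewrite cards_eq0; apply/eqP/setP=> a; rewrite inE.
  by apply/negP=> /(colorsP c)[x [y [xS yS xy _]]]; move: xS yS xy; rewrite !inE => /eqP-> /eqP->; rewrite eqxx.
have [S [cS HS]] := IH (ltnW kn).
have [w wS] : exists w, w \notin S.
  have : (0 < #|~: S|)%N by rewrite cardsCs setCK card_ord cS subn_gt0.
  by rewrite card_gt0 => /set0Pn[w]; rewrite inE; exists w.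
have cwS : #|w |: S| = k.+2 by rewrite cardsU1 wS cS.
have hb : 'C(k.+2, 2) = ('C(k.+1, 2) + k.+1)%N by rewrite binS bin1.
case: (boolP [exists w', exists s, (w' \notin S) && (s \in S) && (c w' s \in colors c S)]).
  case/existsP=> w' /existsP[s /andP[/andP[w'S sS] csS]].
  have := gamma_add1 hsym w'S sS csS.
  have cw'S : #|w' |: S| = k.+2 by rewrite cardsU1 w'S cS.
  exists (w' |: S); rewrite cw'S; split=> //; lia.
move=> /negP Hn.
have [s0 s0S] : exists s0, s0 \in S.
  have : (0 < #|S|)%N by rewrite cS.
  by rewrite card_gt0 => /set0Pn[s0]; exists s0.
have := gamma_closed hsym hprop s0S.
have H' : forall w s, w \notin S -> s \in S -> c w s \notin colors c S.
  move=> w1 s1 w1S s1S; apply/negP=> h; apply: Hn.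
  by apply/existsP; exists w1; apply/existsP; exists s1; rewrite w1S s1S h.
move/(_ H')=> h1.
have := gamma_add hsym wS.
have hb1 : 'C(k.+1, 2) = ('C(k, 2) + k)%N by rewrite binS bin1.
have hk := bin2_ge k.
exists (w |: S); rewrite cwS; split=> //; lia.
Qed.

Lemma half_img (m : nat) (R : finType) (f : 'I_m -> 'I_m -> R) (Q : 'I_m -> 'I_m -> bool) :
  (forall a b, Q a b = Q b a) -> (forall a b, f a b = f b a) -> (forall a, Q a a = false) ->
  (2 * #|[set f p.1 p.2 | p in [set p : 'I_m * 'I_m | Q p.1 p.2]]| <= #|[set p : 'I_m * 'I_m | Q p.1 p.2]|)%N.
Proof.
move=> Qs fs Qi.
set LT := [set p : 'I_m * 'I_m | Q p.1 p.2 && (p.1 < p.2)%N].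
set GT := [set p : 'I_m * 'I_m | Q p.1 p.2 && (p.2 < p.1)%N].
have e1 : [set p : 'I_m * 'I_m | Q p.1 p.2] = LT :|: GT.
  apply/setP=> [[a b]]; rewrite !inE /=; case: (boolP (Q a b)) => //= q.
  case: (ltngtP a b) => // /val_inj e; by rewrite e Qi in q.
have d : [disjoint LT & GT].
  apply/pred0P=> [[a b]]; rewrite /= !inE /=; apply/negP=> /andP[/andP[_ h1] /andP[_ h2]]; lia.
have e2 : #|GT| = #|LT|.
  rewrite /LT (card_swap (fun a b => Q a b && (a < b)%N)); apply: eq_card => p; by rewrite !inE Qs.
have e3 : [set f p.1 p.2 | p in [set p : 'I_m * 'I_m | Q p.1 p.2]] \subset [set f p.1 p.2 | p in LT].
  apply/subsetP=> z /imsetP[[a b]]; rewrite inE /= => q ->.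
  case: (ltngtP a b) => h.
  - by apply/imsetP; exists (a, b); rewrite // inE q h.
  - by apply/imsetP; exists (b, a); [rewrite inE Qs q h | rewrite /= fs].
  - by move/val_inj: h => e; rewrite e Qi in q.
have h4 := subset_leq_card e3.
have h5 : (#|[set f p.1 p.2 | p in LT]| <= #|LT|)%N := leq_imset_card _ _.
have h6 : #|[set p : 'I_m * 'I_m | Q p.1 p.2]| = (#|LT| + #|GT|)%N by rewrite e1 (cardU_disj d).
lia.
Qed.

Section Colored.
Variable n : nat.
Variable c : 'I_n -> 'I_n -> 'I_n.-1.
Hypothesis hsym : forall u v, c u v = c v u.
Hypothesis hprop : forall u v w, u != v -> u != w -> c u v = c u w -> v = w.
Variable A : {set 'I_n.-1}.
Definition cadj : rel 'I_n := fun x y => (x != y) && (c x y \in A).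

Lemma cadj_sym x y : cadj x y = cadj y x.
Proof. by rewrite /cadj eq_sym hsym. Qed.
Lemma cadj_irr x : cadj x x = false.
Proof. by rewrite /cadj eqxx. Qed.

Lemma cdeg x : #|[set y | cadj x y]| = #|A|.
Proof.
have inj : {in [set y | cadj x y] &, injective (c x)}.
  move=> y z; rewrite !inE => /andP[h1 _] /andP[h2 _]; exact: hprop.
have E : c x @: [set y | cadj x y] = A.
  apply/setP=> a; apply/imsetP/idP.
    by case=> y; rewrite inE => /andP[_ h] ->.
  move=> aA; have [y yx cy] := surj hprop x a; exists y => //.
  by rewrite inE /cadj eq_sym yx cy aA.
by rewrite -(card_in_imset inj) E.
Qed.

Lemma gamma_bound (S : {set 'I_n}) :
  (2 * gamma c S + e2 cadj S <= 2 * #|A| + #|S| * #|S|.-1)%N.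
Proof.
set Q := fun a b => [&& a \in S, b \in S, a != b & c a b \notin A].
have h1 : colors c S \subset A :|: [set c p.1 p.2 | p in [set p : 'I_n * 'I_n | Q p.1 p.2]].
  apply/subsetP=> a /colorsP[x [y [xS yS xy ->]]]; rewrite inE.
  case: (boolP (c x y \in A)) => //= h; apply/imsetP; exists (x, y) => //; by rewrite inE /Q /= xS yS xy h.
have h2 := half_img (f := c) (Q := Q).
have h2' : (2 * #|[set c p.1 p.2 | p in [set p : 'I_n * 'I_n | Q p.1 p.2]]| <= #|[set p : 'I_n * 'I_n | Q p.1 p.2]|)%N.
  apply: h2 => //.
  - by move=> a b; rewrite /Q eq_sym hsym; case: (a \in S); case: (b \in S).
  - by move=> a; rewrite /Q eqxx !andbF.
set img := [set c p.1 p.2 | p in [set p : 'I_n * 'I_n | Q p.1 p.2]].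
have h3 : (#|A :|: img| <= #|A| + #|img|)%N := cardU_le A img.
have h4 : (#|colors c S| <= #|A :|: img|)%N := subset_leq_card h1.
have h5 : (#|[set p : 'I_n * 'I_n | Q p.1 p.2]| + e2 cadj S <= #|S| * #|S|.-1)%N.
  have -> : (#|[set p : 'I_n * 'I_n | Q p.1 p.2]| + e2 cadj S =
     #|[set p : 'I_n * 'I_n | [&& p.1 \in S, p.2 \in S & p.1 != p.2]]|)%N.
    rewrite /e2 -cardsUI; set U := _ :|: _; set I := _ :&: _.
    have -> : I = set0.
      apply/setP=> p; rewrite !inE /Q /cadj; case: (p.1 \in S); case: (p.2 \in S); case: (c p.1 p.2 \in A) => //=; by rewrite !andbF.
    rewrite cards0 addn0; apply: eq_card => p; rewrite !inE /Q /cadj.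
    by case: (p.1 \in S); case: (p.2 \in S); case: (p.1 != p.2); case: (c p.1 p.2 \in A).
  rewrite (card_pairs (fun a b => [&& a \in S, b \in S & a != b])).
  have -> : (\sum_i #|[set y | [&& i \in S, y \in S & i != y]]| = \sum_(i in S) #|S :\ i|)%N.
    rewrite [RHS]big_mkcond; apply: eq_bigr => i _ /=; case: (boolP (i \in S)) => iS.
      by apply: eq_card => y; rewrite !inE /= andbC eq_sym.
    apply/eqP; rewrite cards_eq0; apply/eqP/setP=> y; by rewrite !inE.
  have -> : (\sum_(i in S) #|S :\ i| = \sum_(i in S) #|S|.-1)%N.
    by apply: eq_bigr => i iS; rewrite (cardsD1 i S) iS.
  by rewrite sum_nat_const.
rewrite gammaE; clear h2; move: h5; set K := (#|S| * #|S|.-1)%N => h5.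
have t1 : (#|colors c S| <= #|A| + #|img|)%N := leq_trans h4 h3.
have t2 : (2 * #|img| <= #|[set p : 'I_n * 'I_n | Q p.1 p.2]|)%N := h2'.
have t3 : (#|[set p : 'I_n * 'I_n | Q p.1 p.2]| + e2 cadj S <= K)%N := h5.
clear -t1 t2 t3.
move: t1 t2 t3; generalize #|colors c S| #|A| #|img| #|[set p : 'I_n * 'I_n | Q p.1 p.2]| (e2 cadj S) K.
move=> a b x y z k; lia.
Qed.
End Colored.
Section RealPart.
Local Open Scope R_scope.

Definition Cst (s : nat) : R := (4 * INR s * (Rinv (ln 3 - ln 2) + 2)).

Lemma ln_le' x y : 0 < x -> x <= y -> ln x <= ln y.
Proof.
move=> hx hxy; case: (Rle_lt_or_eq_dec _ _ hxy) => h.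
  by apply: Rlt_le; apply: ln_increasing.
by rewrite h; apply: Rle_refl.
Qed.

Lemma INR_expn a j : INR (a ^ j)%N = INR a ^ j.
Proof.
elim: j => [|j IH]; first by rewrite expn0.
by rewrite expnS mulnE mult_INR IH.
Qed.

Lemma L32 : (0 < ln 3 - ln 2).
Proof. have := ln_increasing 2 3; lra. Qed.

Lemma Cst_pos s : (0 < s)%N -> (0 < Cst s).
Proof.
move=> hs; rewrite /Cst.
have : (0 < INR s) by apply: lt_0_INR; apply/ltP.
have := Rinv_0_lt_compat _ L32. move=> h1 h2. 
apply: Rmult_lt_0_compat; [lra|lra].
Qed.

Lemma real_bound j k n s : (3 <= n)%N -> (3 ^ j <= 2 ^ j * n)%N -> (k <= 4 * s * (j + 2))%N ->
  (INR k <= Cst s * ln (INR n)).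
Proof.
move=> hn hj hk.
have hn' : (3 <= INR n) by have := le_INR 3%N n; rewrite /=; move/(_ (elimT leP hn)); lra.
have hl1 : (1 <= ln (INR n)).
  rewrite -[X in (X <= _)](ln_exp 1); apply: ln_le'; [exact: exp_pos|]; have := exp_le_3; lra.
have hj' : (INR j * (ln 3 - ln 2) <= ln (INR n)).
  have e : (INR (3 ^ j) <= INR (2 ^ j * n)) by apply: le_INR; apply/leP.
  rewrite mulnE mult_INR !INR_expn in e.
  have e3 : INR 3 = 3 by simpl; lra.
  have e2 : INR 2 = 2 by simpl; lra.
  rewrite e3 e2 in e.
  have p3 : 0 < 3 ^ j by apply: pow_lt; lra.
  have p2 : 0 < 2 ^ j by apply: pow_lt; lra.
  have pn : 0 < INR n by lra.
  have h3 : 0 < 3 by lra.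
  have h2 : 0 < 2 by lra.
  have := ln_le' p3 e; rewrite (ln_mult _ _ p2 pn) (ln_pow _ h3) (ln_pow _ h2).
  lra.
have hk' : (INR k <= 4 * INR s * (INR j + 2)).
  have := le_INR _ _ (elimT leP hk); rewrite !mult_INR plus_INR /=. lra.
have hs : (0 <= INR s) := pos_INR s.
have hi : 0 < Rinv (ln 3 - ln 2) := Rinv_0_lt_compat _ L32.
have hjl : INR j <= ln (INR n) * Rinv (ln 3 - ln 2).
  have := Rmult_le_compat_r (Rinv (ln 3 - ln 2)) _ _ (Rlt_le _ _ hi) hj'.
  rewrite Rmult_assoc Rinv_r ?Rmult_1_r //; have := L32; lra.
rewrite /Cst.
have : INR j + 2 <= ln (INR n) * (Rinv (ln 3 - ln 2) + 2) by nra.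
nra.
Qed.

End RealPart.

Lemma pow_big m : (2 ^ m * m < 3 ^ m)%N.
Proof.
case: m => [|[|m]] //.
elim: m => [|m IH] //.
rewrite !(expnS _ m.+2).
have h : (1 <= 2 ^ m.+2)%N by rewrite expn_gt0.
move: IH h; set a := (2 ^ m.+2)%N; set b := (3 ^ m.+2)%N => IH h; nia.
Qed.

Lemma cardA m T : (T <= m)%N -> #|[set a : 'I_m | (a < T)%N]| = T.
Proof.
elim: T => [|T IH] hT.
  by apply/eqP; rewrite cards_eq0; apply/eqP/setP=> a; rewrite !inE.
have -> : [set a : 'I_m | (a < T.+1)%N] = (Ordinal hT) |: [set a : 'I_m | (a < T)%N].
  apply/setP=> a; rewrite !inE ltnS leq_eqVlt; congr (_ || _).
by rewrite cardsU1 inE ltnn IH ?(ltnW hT).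
Qed.

Lemma grow_arith dd x y e : (x >= 4*dd+13)%N -> ((4*dd+12) * x <= (4*dd+12) * y + e)%N ->
  (e + 2 < 2 * x + 2 * (4*dd+12 + dd + 1))%N -> (3 * x <= 2 * (x + y))%N.
Proof. move=> h1 h2 h3. nia. Qed.

Lemma fin_arith k C2 E G K dd : (2 * C2 = K -> 2 * k + 2 * (4 * dd + 12 + dd + 1) <= E + 2 ->
  2 * G + E <= 2 * (4 * dd + 12) + K -> k + dd + G <= C2)%N.
Proof. lia. Qed.

Lemma part2 (dd : nat) : exists C : R, Rlt 0 C /\ exists n0 : nat, forall n : nat, (n0 <= n)%N ->
  forall c : 'I_n -> 'I_n -> 'I_n.-1, one_factorization c ->
  exists S : {set 'I_n}, (1 <= #|S|)%N /\ Rle (INR #|S|) (Rmult C (ln (INR n))) /\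
    (#|S| + dd + gamma c S <= 'C(#|S|, 2))%N.
Proof.
set T := (4 * dd + 12)%N; set s := (T + dd + 1)%N.
exists (Cst s); split; first by apply: Cst_pos; rewrite /s; lia.
exists (T + 3)%N => n hn c [hsym hprop].
set A := [set a : 'I_n.-1 | (a < T)%N].
have cA : #|A| = T by apply: cardA; lia.
have n0 : (0 < n)%N by lia.
pose v : 'I_n := Ordinal n0.
pose adj := cadj c A.
have asym : forall x y, adj x y = adj y x := cadj_sym hsym A.
have airr : forall x, adj x x = false := cadj_irr c A.
have hdeg : forall x, #|[set y | adj x y]| = T by move=> x; rewrite -cA; apply: cdeg.
pose BB := B adj v.
have BBS k : BB k.+1 = BB k :|: Nb adj (BB k) by [].
have hB1 : forall k, (T + 1 <= #|BB k.+1|)%N.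
  move=> k; have sub : BB 1 \subset BB k.+1 by apply: B_mono.
  apply: leq_trans (subset_leq_card sub); rewrite BBS.
  have -> : Nb adj (BB 0) = [set y | adj v y].
    apply/setP=> y; rewrite !inE; apply/existsP/idP => [[x /andP[]]|h].
      by rewrite /BB B0 inE => /eqP->.
    by exists v; rewrite /BB B0 inE eqxx.
  have : v \notin [set y | adj v y] by rewrite inE airr.
  rewrite /BB B0 -/BB => h; rewrite cardsU1 h hdeg; lia.
set exc := fun k => (2 * #|BB k| + 2 * s <= e2 adj (BB k) + 2)%N.
have hgrow : forall k, ~~ exc k.+1 -> (3 * #|BB k.+1| <= 2 * #|BB k.+2|)%N.
  move=> k hk; set X := BB k.+1.
  have g := growth asym hdeg X.
  have e : #|BB k.+2| = (#|X| + #|Nb adj X :\: X|)%N.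
    rewrite BBS -/X; have := cardsUI X (Nb adj X); have := cardsID X (Nb adj X).
    rewrite setIC; lia.
  rewrite e; apply: (grow_arith (dd := dd) (e := e2 adj X)).
  - by move: (hB1 k); rewrite -/X /T; lia.
  - exact: g.
  - by move: hk; rewrite /exc -/X /s /T; lia.
set P := fun j => exc j.+1 || (2 ^ j * n < 3 ^ j)%N.
have exP : exists j, P j by exists n; rewrite /P pow_big orbT.
case: (ex_minnP exP) => j0 Pj0 minj.
have hind : forall i, (i <= j0)%N -> (3 ^ i * (T + 1) <= 2 ^ i * #|BB i.+1|)%N.
  elim=> [|i IH] hi; first by rewrite !expn0 !mul1n hB1.
  have nP : ~~ P i by apply/negP=> /minj; lia.
  have ne : ~~ exc i.+1 by move: nP; rewrite /P negb_or => /andP[].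
  have h1 := hgrow i ne; have h2 := IH (ltnW hi).
  rewrite !expnS -!mulnA; apply: leq_trans (leq_mul (leqnn 3) h2) _.
  have -> : (3 * (2 ^ i * #|BB i.+1|) = 2 ^ i * (3 * #|BB i.+1|))%N by rewrite mulnCA.
  have -> : (2 * (2 ^ i * #|BB i.+2|) = 2 ^ i * (2 * #|BB i.+2|))%N by rewrite mulnCA.
  by rewrite leq_mul2l h1 orbT.
have bn : (#|BB j0.+1| <= n)%N by apply: leq_trans (max_card _) _; rewrite card_ord.
have h3 : (3 ^ j0 <= 2 ^ j0 * n)%N.
  have t1 : (3 ^ j0 <= 3 ^ j0 * (T + 1))%N by rewrite leq_pmulr // addn1.
  have t2 : (2 ^ j0 * #|BB j0.+1| <= 2 ^ j0 * n)%N by rewrite leq_mul2l bn orbT.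
  have t3 := hind j0 (leqnn _). exact: leq_trans t1 (leq_trans t3 t2).
have ex : exc j0.+1.
  move: Pj0; rewrite /P => /orP[//|]; rewrite ltnNge h3 //.
have s0 : (0 < s)%N by rewrite /s; lia.
have [S [SB vS cS eS]] := tree asym airr s0 ex.
exists S; split; first by rewrite card_gt0; apply/set0Pn; exists v.
split.
  apply: real_bound h3 _; first by lia.
  by rewrite addn2.
have gb := gamma_bound hsym A S; rewrite cA in gb.
have hb := bin2_mul #|S|.
rewrite /s /T /adj in eS; rewrite /T in gb.
exact: (fin_arith hb eS gb).
Qed.

Import Order.TTheory GRing.Theory Num.Theory.
Local Open Scope ring_scope.

Theorem theorem4 :
  (* (i) *)
  (forall (n k : nat), ~~ odd n -> (4 <= k <= n)%N ->
     forall c : 'I_n -> 'I_n -> 'I_n.-1, one_factorization c ->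
     exists S : {set 'I_n}, #|S| = k /\ (k%:Z - 3 <= deficit c S)%R)
  /\
  (* (ii) *)
  (forall d : int, (-2 <= d)%R ->
     exists C : R, Rlt 0 C /\
     exists n0 : nat, forall n : nat, ~~ odd n -> (n0 <= n)%N ->
       forall c : 'I_n -> 'I_n -> 'I_n.-1, one_factorization c ->
       exists S : {set 'I_n}, (1 <= #|S|)%N /\
         Rle (INR #|S|) (Rmult C (ln (INR n))) /\
         ((#|S|)%:Z + d <= deficit c S)%R).
Proof.
split.
  move=> n k _ /andP[k4 kn] c hc.
  have hk : (1 <= k <= n)%N by rewrite kn andbT; apply: leq_trans k4.
  have [S [cS hS]] := part1 hc hk.
  exists S; split => //; rewrite /deficit cS; lia.
move=> d hd; have [C [hC [n0 H]]] := part2 `|d|%N.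
exists C; split => //; exists n0 => n _ hn c hc.
have [S [h1 [h2 h3]]] := H n hn c hc.
exists S; split => //; split => //; rewrite /deficit.
have : (d <= (`|d|%N)%:Z)%R by lia.
lia.
Qed.
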